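(* Let $D$ be a tournament missing disjoint paths of length 2 and let $C=a_1b_1c_1,\dots,a_kb_kc_k$ be a double cycle in $\Delta(D)$. For each $i\in\{1,\dots,k\}$ choose $\{x_i,y_i\}=\{a_i,b_i\}$ or $\{x_i,y_i\}=\{b_i,c_i\}$ (with either labelling). Then for all $j\in\{1,\dots,k\}$ and all $i\neq j$: (1) $x_j\to x_i$ if and only if $y_i\to x_j$; (2) $x_j\to y_i$ if and only if $x_i\to x_j$; (3) $y_j\to x_i$ if and only if $y_i\to y_j$; (4) $y_j\to y_i$ if and only if $x_i\to y_j$.
   Context: All digraphs are finite oriented graphs. $N^+(v)$ is the out-neighborhood; $N^{++}(v)$ is the set of vertices $w\notin N^+(v)\cup\{v\}$ with $u\to w$ for some $u\in N^+(v)$. A missing edge is a pair of distinct non-adjacent vertices; the missing graph is formed by the missing edges. $D$ is a tournament missing disjoint paths of length 2 if its missing graph is a vertex-disjoint union of paths each with exactly two edges. For missing edges $\{x,y\},\{a,b\}$, $\{x,y\}$ loses to $\{a,b\}$ (written $xy\to ab$) if the endpoints can be labelled so that $x\to a$, $b\notin N^+(x)\cup N^{++}(x)$, $y\to b$, $a\notin N^+(y)\cup N^{++}(y)$. $\Delta(D)$ has the missing edges as vertices and arcs $(e,e')$ whenever $e$ loses to $e'$. For missing paths $abc$, $xyz$ (edges $ab,bc$ and $xy,yz$), $abc\to xyz$ means each of $ab,bc$ loses to each of $xy,yz$. A double cycle is a sequence $C=a_1b_1c_1,\dots,a_kb_kc_k$ ($k\ge2$) of distinct missing paths of length 2 (components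 of the missing graph) with $a_ib_ic_i\to a_{i+1}b_{i+1}c_{i+1}$ for all $i$, indices modulo $k$. *)

(* Defs.v *)
From mathcomp Require Import all_boot.
Set Implicit Arguments. Unset Strict Implicit. Unset Printing Implicit Defensive.

Definition oriented (T : finType) (arc : rel T) : Prop :=
  (forall v, ~~ arc v v) /\ (forall u v, arc u v -> ~~ arc v u).

Section Defs.
Variables (T : finType) (arc : rel T).

Definition Nout (v : T) : {set T} := [set w | arc v w].
Definition Nout2 (v : T) : {set T} :=
  [set w | (w \notin Nout v) && (w != v) && [exists u, (u \in Nout v) && arc u w]].

Definition miss (x y : T) : bool := (x != y) && ~~ arc x y && ~~ arc y x.

(* a b c is a component of the missing graph which is a path with the two
   edges ab, bc *)
Definition mpath (a b c : T) : Prop :=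
  [/\ a != c, miss a b, miss b c &
      forall z, [/\ miss a z = (z == b), miss c z = (z == b) &
                    miss b z = (z == a) || (z == c)]].

Definition missing_disjoint_P3 : Prop :=
  forall x y, miss x y -> exists a b c, mpath a b c /\
    ((x == a) && (y == b) || (x == b) && (y == a) ||
     (x == b) && (y == c) || (x == c) && (y == b)).

Definition loses_lab (x y a b : T) : bool :=
  [&& arc x a, b \notin Nout x :|: Nout2 x, arc y b & a \notin Nout y :|: Nout2 y].

Definition loses (x y a b : T) : bool :=
  [|| loses_lab x y a b, loses_lab y x a b, loses_lab x y b a | loses_lab y x b a].

Definition ploses (a b c x y z : T) : bool :=
  [&& loses a b x y, loses a b y z, loses b c x y & loses b c y z].

Definition double_cycle (k : nat) (a b c : nat -> T) : Prop :=
  [/\ 2 <= k,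
      forall i, i < k -> mpath (a i) (b i) (c i),
      forall i j, i < j < k -> [set a i; b i; c i] != [set a j; b j; c j] &
      forall i, i < k -> ploses (a i) (b i) (c i)
                               (a (i.+1 %% k)) (b (i.+1 %% k)) (c (i.+1 %% k))].

End Defs.

(* Main.v *)
Require Import Defs.
From mathcomp Require Import all_boot zify.
Set Implicit Arguments. Unset Strict Implicit. Unset Printing Implicit Defensive.

Section S.
Variables (T : finType) (arc : rel T).
Hypothesis Hor : oriented arc.

Lemma asym u v : arc u v -> ~~ arc v u.
Proof. by case: Hor => _; apply. Qed.

Lemma key1 x v w : arc x v -> w \notin Nout arc x :|: Nout2 arc x -> ~~ arc v w.
Proof.
move=> xv; rewrite !inE negb_or => /andP[nb nb2]; apply/negP => vw.
case: (eqVneq w x) => [E|wx].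
  by move: (asym xv); rewrite -E vw.
move: nb2; rewrite /Nout2 /Nout ?inE nb wx /=; case/negP.
by apply/existsP; exists v; rewrite ?inE xv vw.
Qed.

Lemma notin_arc x w : w \notin Nout arc x :|: Nout2 arc x -> ~~ arc x w.
Proof. by rewrite !inE negb_or => /andP[]. Qed.

Lemma fwd_lab x y p q v : loses_lab arc x y p q -> arc x v -> arc y v ->
  ~~ arc v p && ~~ arc v q.
Proof.
case/and4P => _ h1 _ h2 xv yv.
by rewrite (key1 yv h2) (key1 xv h1).
Qed.

Lemma own_fwd_lab x y p q v : loses_lab arc x y p q -> arc x v -> arc y v ->
  (v = p \/ v = q) -> False.
Proof.
case/and4P => _ h1 _ h2 xv yv [] E; subst v.
  by move: (notin_arc h2); rewrite yv.
by move: (notin_arc h1); rewrite xv.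
Qed.

Lemma bwd_lab x y p q v : loses_lab arc x y p q -> arc v p -> arc v q ->
  ~~ arc x v && ~~ arc y v.
Proof.
case/and4P => _ h1 _ h2 vp vq.
apply/andP; split; apply/negP => H.
  by move: (key1 H h1); rewrite vq.
by move: (key1 H h2); rewrite vp.
Qed.

Lemma own_bwd_lab x y p q v : loses_lab arc x y p q -> arc v p -> arc v q ->
  (v = x \/ v = y) -> False.
Proof.
case/and4P => _ h1 _ h2 vp vq [] E; subst v.
  by move: (notin_arc h1); rewrite vq.
by move: (notin_arc h2); rewrite vp.
Qed.

Lemma fwd x y p q v : loses arc x y p q -> arc x v -> arc y v ->
  ~~ arc v p && ~~ arc v q.
Proof.
move=> + xv yv; case/or4P => H.
- exact: (fwd_lab H).
- exact: (fwd_lab H).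
- by rewrite andbC; exact: (fwd_lab H).
- by rewrite andbC; exact: (fwd_lab H).
Qed.

Lemma own_fwd x y p q v : loses arc x y p q -> arc x v -> arc y v ->
  (v = p \/ v = q) -> False.
Proof.
move=> + xv yv E; case/or4P => H.
- exact: (own_fwd_lab H xv yv).
- exact: (own_fwd_lab H yv xv).
- by apply: (own_fwd_lab H xv yv); case: E; auto.
- by apply: (own_fwd_lab H yv xv); case: E; auto.
Qed.

Lemma bwd x y p q v : loses arc x y p q -> arc v p -> arc v q ->
  ~~ arc x v && ~~ arc y v.
Proof.
move=> + vp vq; case/or4P => H.
- exact: (bwd_lab H).
- by rewrite andbC; exact: (bwd_lab H).
- exact: (bwd_lab H vq vp).
- by rewrite andbC; exact: (bwd_lab H vq vp).
Qed.

Lemma own_bwd x y p q v : loses arc x y p q -> arc v p -> arc v q ->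
  (v = x \/ v = y) -> False.
Proof.
move=> + vp vq E; case/or4P => H.
- exact: (own_bwd_lab H vp vq).
- by apply: (own_bwd_lab H vp vq); case: E; auto.
- exact: (own_bwd_lab H vq vp).
- by apply: (own_bwd_lab H vq vp); case: E; auto.
Qed.

Lemma miss_sym u w : miss arc u w = miss arc w u.
Proof. by rewrite /miss eq_sym andbAC. Qed.

Lemma L1 a b c z w : mpath arc a b c -> z \in [:: a; b; c] -> miss arc z w ->
  w \in [:: a; b; c].
Proof.
case=> _ _ _ H; have [H1 H2 H3] := H w.
rewrite !inE => /or3P[] /eqP ->.
- by rewrite H1 => ->; rewrite orbT.
- by rewrite H3 => /orP[] ->; rewrite ?orbT.
- by rewrite H2 => ->; rewrite orbT.
Qed.

Lemma L2 a b c a' b' c' u : mpath arc a b c -> mpath arc a' b' c' ->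
  u \in [:: a; b; c] -> u \in [:: a'; b'; c'] ->
  {subset [:: a'; b'; c'] <= [:: a; b; c]}.
Proof.
move=> mp mp' uS uS'.
have mp'2 := mp'; case: mp'2 => _ m1 m2 _.
have hb : b' \in [:: a; b; c].
  rewrite !inE in uS'; case/or3P: uS' => /eqP E; subst u.
  - exact: (L1 mp uS m1).
  - by [].
  - by apply: (L1 mp uS); rewrite miss_sym.
have ha : a' \in [:: a; b; c] by apply: (L1 mp hb); rewrite miss_sym.
have hc : c' \in [:: a; b; c] by apply: (L1 mp hb).
move: ha hb hc; rewrite !inE => ha hb hc.
by move=> z; rewrite !inE => /or3P[] /eqP ->.
Qed.

End S.

Section C.
Variables (T : finType) (arc : rel T) (k : nat) (a b c : nat -> T).
Hypothesis Hor : oriented arc.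
Hypothesis Hdc : double_cycle arc k a b c.

Definition S m := [:: a m; b m; c m].

Lemma shared i j u : i < k -> j < k -> u \in S i -> u \in S j -> i = j.
Proof.
move=> ik jk ui uj; case: Hdc => _ Hmp Hd _.
have E : forall z, (z \in S i) = (z \in S j).
  move=> z; apply/idP/idP.
  - exact: (L2 (Hmp _ jk) (Hmp _ ik) uj ui).
  - exact: (L2 (Hmp _ ik) (Hmp _ jk) ui uj).
have Es : [set a i; b i; c i] = [set a j; b j; c j].
  apply/setP => z; have := E z; rewrite /S !inE -!orbA => ->; done.
case: (ltngtP i j) => // h.
- by move: (Hd i j); rewrite h jk Es eqxx => /(_ isT).
- by move: (Hd j i); rewrite h ik Es eqxx => /(_ isT).
Qed.

Lemma sep i j v w : i < k -> j < k -> i != j -> v \in S j -> w \in S i ->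
  (v != w) && ~~ miss arc v w.
Proof.
move=> ik jk ij vj wi; case: Hdc => _ Hmp _ _.
apply/andP; split; apply/negP => H.
- by move/eqP: H => E; subst w; move: ij; rewrite (shared ik jk wi vj) eqxx.
- have wj : w \in S j by exact: (L1 (Hmp _ jk) vj H).
  by move: ij; rewrite (shared ik jk wi wj) eqxx.
Qed.

Lemma adj i j v w : i < k -> j < k -> i != j -> v \in S j -> w \in S i ->
  ~~ arc v w -> arc w v.
Proof.
move=> ik jk ij vj wi; case/andP: (sep ik jk ij vj wi) => vw.
by rewrite /miss vw /= negb_and !negbK => /orP[] -> //.
Qed.

Lemma adj' i j v w : i < k -> j < k -> i != j -> v \in S j -> w \in S i ->
  ~~ arc w v -> arc v w.
Proof.
move=> ik jk ij vj wi; case/andP: (sep ik jk ij vj wi) => vw.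
by rewrite /miss vw /= negb_and !negbK => /orP[] -> //.
Qed.

Variables (j : nat) (v : T).
Hypothesis jk : j < k.
Hypothesis vj : v \in S j.

Definition Ledge m := (arc (a m) v && arc (b m) v) || (arc (b m) v && arc (c m) v).
Definition Bedge m := (arc v (a m) && arc v (b m)) || (arc v (b m) && arc v (c m)).

Lemma k0 : 0 < k. Proof. by case: Hdc; lia. Qed.

Lemma nextE m : m < k -> m.+1 %% k = if m.+1 < k then m.+1 else 0.
Proof.
move=> mk; case: ifP => h; first by rewrite modn_small.
have -> : m.+1 = k by lia.
by rewrite modnn.
Qed.

Lemma ploses_at m : m < k ->
  ploses arc (a m) (b m) (c m) (a (m.+1 %% k)) (b (m.+1 %% k)) (c (m.+1 %% k)).
Proof. by case: Hdc => _ _ _ H; apply: H. Qed.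

Lemma fwd_step m : m < k -> Ledge m -> m.+1 %% k != j -> Ledge (m.+1 %% k).
Proof.
move=> mk L nj; set m' := m.+1 %% k.
have m'k : m' < k by rewrite /m' ltn_mod k0.
have Sa : a m' \in S m' by rewrite /S !inE eqxx.
have Sb : b m' \in S m' by rewrite /S !inE eqxx ?orbT.
case/and4P: (ploses_at mk) => h1 _ h2 _.
case/orP: L => /andP[x1 x2].
- case/andP: (fwd Hor h1 x1 x2) => n1 n2.
  by rewrite /Ledge (adj m'k jk nj vj Sa n1) (adj m'k jk nj vj Sb n2).
- case/andP: (fwd Hor h2 x1 x2) => n1 n2.
  by rewrite /Ledge (adj m'k jk nj vj Sa n1) (adj m'k jk nj vj Sb n2).
Qed.

Lemma fwd_own m : m < k -> Ledge m -> m.+1 %% k = j -> False.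
Proof.
move=> mk L E; case/and4P: (ploses_at mk); rewrite E => h1 h2 h3 h4.
have vj' := vj; rewrite /S !inE in vj'.
case/orP: L => /andP[x1 x2]; case/or3P: vj' => /eqP V.
- exact: (own_fwd h1 x1 x2 (or_introl V)).
- exact: (own_fwd h1 x1 x2 (or_intror V)).
- exact: (own_fwd h2 x1 x2 (or_intror V)).
- exact: (own_fwd h3 x1 x2 (or_introl V)).
- exact: (own_fwd h3 x1 x2 (or_intror V)).
- exact: (own_fwd h4 x1 x2 (or_intror V)).
Qed.

Definition dist m := if m <= j then j - m else j + k - m.

Lemma fwd_chain n : forall m, m < k -> dist m = n.+1 -> Ledge m -> False.
Proof.
elim: n => [|n IH] m mk D L.
  apply: (fwd_own mk L); rewrite nextE //; move: D; rewrite /dist.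
  by case: ifP; case: ifP; lia.
have nj : m.+1 %% k != j.
  apply/eqP; rewrite nextE //; move: D; rewrite /dist.
  by case: ifP; case: ifP; lia.
apply: (IH _ _ _ (fwd_step mk L nj)); first by rewrite ltn_mod k0.
move: D; rewrite /dist nextE //.
case: (ltnP m.+1 k) => h1; case: (leqP m j) => h2; case: (leqP m.+1 j) => h3;
  case: (leqP 0 j) => h4; lia.
Qed.

Lemma bwd_step p : p < k -> Bedge (p.+1 %% k) -> p != j -> Bedge p.
Proof.
move=> pk B nj.
have Sa : a p \in S p by rewrite /S !inE eqxx.
have Sb : b p \in S p by rewrite /S !inE eqxx ?orbT.
have Sc : c p \in S p by rewrite /S !inE eqxx ?orbT.
case/and4P: (ploses_at pk) => h1 h2 h3 h4.
case/orP: B => /andP[x1 x2].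
- case/andP: (bwd Hor h1 x1 x2) => n1 n2.
  by rewrite /Bedge (adj' pk jk nj vj Sa n1) (adj' pk jk nj vj Sb n2).
- case/andP: (bwd Hor h2 x1 x2) => n1 n2.
  by rewrite /Bedge (adj' pk jk nj vj Sa n1) (adj' pk jk nj vj Sb n2).
Qed.

Lemma bwd_own p : p < k -> Bedge (p.+1 %% k) -> p = j -> False.
Proof.
move=> pk B E; subst p; case/and4P: (ploses_at pk) => h1 h2 h3 h4.
have vj' := vj; rewrite /S !inE in vj'.
case/orP: B => /andP[x1 x2]; case/or3P: vj' => /eqP V.
- exact: (own_bwd h1 x1 x2 (or_introl V)).
- exact: (own_bwd h1 x1 x2 (or_intror V)).
- exact: (own_bwd h3 x1 x2 (or_intror V)).
- exact: (own_bwd h2 x1 x2 (or_introl V)).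
- exact: (own_bwd h2 x1 x2 (or_intror V)).
- exact: (own_bwd h4 x1 x2 (or_intror V)).
Qed.

Definition bdist m := if j <= m then m - j else m + k - j.

Lemma bwd_chain n : forall m, m < k -> bdist m = n.+1 -> Bedge m -> False.
Proof.
have k2 : 2 <= k by case: Hdc.
elim: n => [|n IH] m mk D B.
- case: m mk D B => [|m] mk D B.
  + have E : k.-1.+1 %% k = 0 by rewrite prednK ?modnn //; lia.
    rewrite -E in B; apply: (bwd_own _ B); first lia.
    by move: D; rewrite /bdist; case: ifP; lia.
  + rewrite -(modn_small mk) in B; apply: (bwd_own _ B); first lia.
    by move: D; rewrite /bdist; case: ifP; lia.
- case: m mk D B => [|m] mk D B.
  + have E : k.-1.+1 %% k = 0 by rewrite prednK ?modnn //; lia.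
    rewrite -E in B.
    have nj : k.-1 != j by apply/eqP; move: D; rewrite /bdist; case: ifP; lia.
    apply: (IH k.-1 _ _ (bwd_step _ B nj)); try lia.
    by move: D; rewrite /bdist; case: ifP; case: ifP; lia.
  + rewrite -(modn_small mk) in B.
    have nj : m != j by apply/eqP; move: D; rewrite /bdist; case: ifP; lia.
    apply: (IH m _ _ (bwd_step _ B nj)); try lia.
    by move: D; rewrite /bdist; case: ifP; case: ifP; lia.
Qed.

End C.

Section F.
Variables (T : finType) (arc : rel T) (k : nat) (a b c : nat -> T).
Hypothesis Hor : oriented arc.
Hypothesis Hdc : double_cycle arc k a b c.
Variables (j : nat) (v : T).
Hypothesis jk : j < k.
Hypothesis vj : v \in S a b c j.

Lemma dist_pos i : i < k -> i != j -> dist k j i = (dist k j i).-1.+1.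
Proof. by move=> ik ij; rewrite /dist; case: ifP; move: ij => /eqP; lia. Qed.

Lemma bdist_pos i : i < k -> i != j -> bdist k j i = (bdist k j i).-1.+1.
Proof. by move=> ik ij; rewrite /bdist; case: ifP; move: ij => /eqP; lia. Qed.

Lemma final_iff i p q : i < k -> i != j ->
  [\/ (p, q) = (a i, b i), (p, q) = (b i, a i),
      (p, q) = (b i, c i) | (p, q) = (c i, b i)] ->
  (arc v p <-> arc q v) /\ (arc v q <-> arc p v).
Proof.
move=> ik ij E.
have pS : p \in S a b c i by case: E => -[-> _]; rewrite /S !inE eqxx ?orbT.
have qS : q \in S a b c i by case: E => -[_ ->]; rewrite /S !inE eqxx ?orbT.
have NL : ~~ (arc p v && arc q v).
  apply/negP => H; apply: (fwd_chain Hor Hdc jk vj ik (dist_pos ik ij)).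
  rewrite /Ledge; case: E => -[-> ->] in H *; case/andP: H => -> ->;
    by rewrite ?andbT ?orbT.
have NB : ~~ (arc v p && arc v q).
  apply/negP => H; apply: (bwd_chain Hor Hdc jk vj ik (bdist_pos ik ij)).
  rewrite /Bedge; case: E => -[-> ->] in H *; case/andP: H => -> ->;
    by rewrite ?andbT ?orbT.
have ap := adj Hdc ik jk ij vj pS.
have aq := adj Hdc ik jk ij vj qS.
have ap' := adj' Hdc ik jk ij vj pS.
have aq' := adj' Hdc ik jk ij vj qS.
have as1 := asym Hor.
split; split => H.
- apply: aq; apply/negP => H2; by move: NB; rewrite H H2.
- apply: ap'; apply/negP => H2; by move: NL; rewrite H H2.
- apply: ap; apply/negP => H2; by move: NB; rewrite H H2.
- apply: aq'; apply/negP => H2; by move: NL; rewrite H H2.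
Qed.
End F.

Theorem corollary4p7 (T : finType) (arc : rel T) (k : nat)
    (a b c x y : nat -> T) :
  oriented arc ->
  missing_disjoint_P3 arc ->
  double_cycle arc k a b c ->
  (forall i, i < k ->
     [\/ (x i, y i) = (a i, b i), (x i, y i) = (b i, a i),
         (x i, y i) = (b i, c i) | (x i, y i) = (c i, b i)]) ->
  forall j i, j < k -> i < k -> i != j ->
    [/\ arc (x j) (x i) <-> arc (y i) (x j),
        arc (x j) (y i) <-> arc (x i) (x j),
        arc (y j) (x i) <-> arc (y i) (y j) &
        arc (y j) (y i) <-> arc (x i) (y j)].
Proof.
move=> Hor _ Hdc Hxy j i jk ik ij.
have xS : x j \in S a b c j by case: (Hxy j jk) => -[-> _]; rewrite /S !inE eqxx ?orbT.
have yS : y j \in S a b c j by case: (Hxy j jk) => -[_ ->]; rewrite /S !inE eqxx ?orbT.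
have [h1 h2] := final_iff Hor Hdc jk xS ik ij (Hxy i ik).
have [h3 h4] := final_iff Hor Hdc jk yS ik ij (Hxy i ik).
by split.
Qed.
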